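(* Let $\Lambda_1$ be a probability measure on $[0,1]$ with $\Lambda_1(\{0\})=0$ (or $\Lambda_1\equiv0$), and let $$\Psi_1(q)=\int_{[0,1]}(qy-1+(1-y)^q)\frac{\Lambda_1(dy)}{y^2},\qquad q\ge1.$$ If $\int_{[0,1]}\frac{1}{\sqrt y}\Lambda_1(dy)<\infty$, then $\lim_{q\to\infty}\Psi_1(q)/q^{3/2}=0$.
   Context: In the paper, $\Lambda_1$ arises from a probability measure $\Lambda$ on $[0,1]$ with $\Lambda(\{0\})=c\in(0,1]$ via $\Lambda=c\delta_0+(1-c)\Lambda_1$. *)

(* Defs.v *)
From HB Require Import structures.
From mathcomp Require Import all_boot all_order all_algebra.
From mathcomp Require Import all_classical all_reals all_analysis.
Set Implicit Arguments. Unset Strict Implicit. Unset Printing Implicit Defensive.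
Import Order.TTheory GRing.Theory Num.Theory.
Import numFieldNormedType.Exports.
Local Open Scope classical_set_scope.
Local Open Scope ring_scope.

(* At y = 0 the integrand evaluates to 0 (since 0^-1 = 0 in MathComp);
   this point is Lambda_1-null by hypothesis, so it is irrelevant. *)
Definition Psi1 (R : realType) (mu : {measure set R -> \bar R}) (q : R) : \bar R :=
  (\int[mu]_(y in `[0%R, 1%R]) ((q * y - 1 + (1 - y) `^ q) / y ^+ 2)%:E)%E.

(* Main.v *)
Require Import Defs.
From HB Require Import structures.
From mathcomp Require Import all_boot all_order all_algebra.
From mathcomp Require Import all_classical all_reals all_analysis.
From mathcomp Require Import measurable_realfun.
From mathcomp Require Import ring lra.
Import Order.TTheory GRing.Theory Num.Theory.
Import numFieldNormedType.Exports.
Local Open Scope classical_set_scope.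
Local Open Scope ring_scope.

Section R1.
Variable R : realType.
Implicit Types q y : R.

Lemma bern q y : 1 <= q -> 0 <= y <= 1 -> 1 - q * y <= (1 - y) `^ q.
Proof.
move=> q1 /andP[y0 y1].
have y'0 : 0 <= 1 - y by lra.
have [->|qn1] := eqVneq q 1; first by rewrite powRr1 // mul1r.
have q1' : 1 < q by rewrite lt_neqAle eq_sym qn1 q1.
have q0 : 0 < q by lra.
have qm0 : 0 < q - 1 by lra.
have p'0 : 0 < q / (q - 1) by rewrite divr_gt0.
have hinv : (q / (q - 1))^-1 = (q - 1) / q by rewrite invf_div.
have h := @conjugate_powR R (1 - y) 1 q (q / (q - 1)) y'0 ler01 q0 p'0.
move: h; rewrite hinv.
have -> : q^-1 + (q - 1) / q = 1.
  by field; rewrite (gt_eqF q0).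
move=> /(_ erefl); rewrite powR1 /= mulr1 mul1r => h.
have h2 : (1 - y) * q <= ((1 - y) `^ q / q + (q - 1) / q) * q.
  by rewrite ler_wpM2r // ltW.
have e : ((1 - y) `^ q / q + (q - 1) / q) * q = (1 - y) `^ q + (q - 1).
  by field; rewrite (gt_eqF q0).
move: h2; rewrite e.
lra.
Qed.

Lemma upper q y : 1 <= q -> 0 <= y <= 1 -> (1 - y) `^ q * (1 + q * y) <= 1.
Proof.
move=> q1 /andP[y0 y1].
have [->|yn1] := eqVneq y 1.
  by rewrite subrr powR0 ?mul0r // gt_eqF //; lra.
have y'0 : 0 < 1 - y by rewrite subr_gt0 lt_neqAle yn1 y1.
have e1 : (1 - y) `^ q <= expR (- (q * y)).
  rewrite /powR gt_eqF // ler_expR -mulrN ler_wpM2l //; first lra.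
  rewrite -[X in _ <= X]expRK ler_ln ?posrE ?expR_gt0 //.
  have := expR_ge1Dx (- y); lra.
have t0 : 0 <= 1 + q * y by rewrite addr_ge0 // mulr_ge0 //; lra.
apply: (le_trans (ler_wpM2r t0 e1)).
apply: (le_trans (ler_wpM2l (ltW (expR_gt0 _)) (expR_ge1Dx (q * y)))).
by rewrite -expRD addNr expR0.
Qed.

End R1.


Section R2.
Variable R : realType.
Implicit Types q y : R.

Definition F q y := (q * y - 1 + (1 - y) `^ q) / y ^+ 2 * (q `^ (3/2))^-1.

Lemma pow32 q : 0 < q -> q `^ (3/2) = q * Num.sqrt q.
Proof.
move=> q0.
have -> : (3/2 : R) = 1 + 2^-1 by field.
by rewrite powRD ?(gt_eqF q0) ?implybT // powRr1 ?ltW // powR12_sqrt ?ltW.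
Qed.

Lemma F0 q : F q 0 = 0.
Proof. by rewrite /F expr0n /= invr0 mulr0 mul0r. Qed.

Lemma alg (t P : R) : 0 < t -> 1 - t^+2 <= P -> P * (1 + t^+2) <= 1 -> 0 <= P ->
  t^+2 - 1 + P <= t^+3.
Proof.
move=> t0 h1 h2 P0.
have Pt : 0 <= P * t^+2 by rewrite mulr_ge0 // sqr_ge0.
have P1 : P <= 1 by lra.
have [t1|t1] := lerP 1 t.
  have : t^+2 <= t^+3 by rewrite exprS ler_peMl // sqr_ge0.
  lra.
have h3 : (t^+2 - 1 + P) * (1 + t^+2) <= t^+4.
  have -> : (t^+2 - 1 + P) * (1 + t^+2) = t^+4 - 1 + P * (1 + t^+2) by ring.
  lra.
have h4 : t^+2 - 1 + P <= (t^+2 - 1 + P) * (1 + t^+2).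
  rewrite ler_peMr //; first lra. by rewrite lerDl sqr_ge0.
have : t^+4 <= t^+3 by rewrite exprS ler_piMl ?exprn_ge0 ?ltW.
lra.
Qed.

Lemma Fexpr q y : 0 < q -> F q y = (q * y - 1 + (1 - y) `^ q) / (y ^+ 2 * (q * Num.sqrt q)).
Proof. by move=> q0; rewrite /F pow32 // -mulrA -invfM. Qed.

Lemma Fdom q y : 1 <= q -> 0 <= y <= 1 -> 0 <= F q y <= (Num.sqrt y)^-1.
Proof.
move=> q1 /andP[y0 y1].
have [->|yn0] := eqVneq y 0; first by rewrite F0 sqrtr0 invr0 lexx.
have yp : 0 < y by rewrite lt_neqAle eq_sym yn0.
have q0 : 0 < q by lra.
have hb := @bern _ q y q1 (introT andP (conj y0 y1)).
have hu := @upper _ q y q1 (introT andP (conj y0 y1)).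
have P0 : 0 <= (1 - y) `^ q by exact: powR_ge0.
set P := (1 - y) `^ q in hb hu P0 *.
set r := Num.sqrt q; set s := Num.sqrt y.
have r0 : 0 < r by rewrite sqrtr_gt0.
have s0 : 0 < s by rewrite sqrtr_gt0.
have hq : q = r ^+ 2 by rewrite sqr_sqrtr // ltW.
have hy : y = s ^+ 2 by rewrite sqr_sqrtr // ltW.
have den : 0 < y ^+ 2 * (q * r) by rewrite !mulr_gt0 // exprn_gt0.
rewrite Fexpr // -/r -/P; apply/andP; split.
  by rewrite divr_ge0 //; [lra | exact: ltW].
rewrite ler_pdivrMr //.
have -> : s^-1 * (y ^+ 2 * (q * r)) = (r * s) ^+ 3.
  by rewrite hy hq; field; rewrite gt_eqF.
have eqy : q * y = (r * s) ^+ 2 by rewrite hy hq; ring.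
rewrite eqy in hb hu *.
apply: alg => //; exact: mulr_gt0.
Qed.

Lemma Fpt q y : 1 <= q -> 0 < y <= 1 -> F q y <= (y * Num.sqrt q)^-1.
Proof.
move=> q1 /andP[yp y1].
have y0 : 0 <= y by exact: ltW.
have q0 : 0 < q by lra.
have hu := @upper _ q y q1 (introT andP (conj y0 y1)).
have P0 : 0 <= (1 - y) `^ q by exact: powR_ge0.
set P := (1 - y) `^ q in hu P0 *.
set r := Num.sqrt q.
have r0 : 0 < r by rewrite sqrtr_gt0.
have den : 0 < y ^+ 2 * (q * r) by rewrite !mulr_gt0 // exprn_gt0.
rewrite Fexpr // -/r -/P ler_pdivrMr //.
have -> : (y * r)^-1 * (y ^+ 2 * (q * r)) = q * y.
  by field; rewrite !gt_eqF.
have : 0 <= P * (q * y) by rewrite !mulr_ge0 // ltW.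
lra.
Qed.

End R2.
Arguments F {R}. Arguments Fdom {R}. Arguments Fpt {R}. Arguments F0 {R}.


Section M.
Variable R : realType.

Lemma minv : measurable_fun [set: R] (@GRing.inv R).
Proof.
rewrite -(setUv [set (0:R)]).
apply/measurable_funU => //; first exact: measurableC.
split; first exact: measurable_fun_set1.
apply: measurable_realfun.open_continuous_measurable_fun.
  by apply: closed_openC; apply: compact_closed; [exact: Rhausdorff | exact: finite_compact (finite_set1 _)].
move=> x; rewrite inE /= => /eqP x0; exact: inv_continuous.
Qed.

Lemma msqrtV : measurable_fun [set: R] (fun y : R => (Num.sqrt y)^-1).
Proof.
apply: measurableT_comp; first exact: minv.
exact: measurable_realfun.continuous_measurable_fun (@sqrt_continuous R).
Qed.

Lemma mG q : measurable_fun [set: R] (fun y : R => (q * y - 1 + (1 - y) `^ q) / y ^+ 2).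
Proof.
apply: (@measurable_realfun.measurable_funM _ _ _ _ (fun y => (q * y - 1 + (1 - y) `^ q)) (fun y => (y ^+ 2)^-1)).
  apply: (@measurable_realfun.measurable_funD _ _ _ _ (fun y => q * y - 1) (fun y => (1 - y) `^ q)).
    apply: (@measurable_realfun.measurable_funB _ _ _ _ (fun y => q * y) (cst 1)) => //.
    by apply: measurable_realfun.measurable_funM.
  apply: (@measurableT_comp _ _ _ _ _ _ (fun a : R => a `^ q) _ (fun y : R => 1 - y)).
    exact: measurable_realfun.measurable_powR.
  exact: measurable_realfun.measurable_funB.
apply: measurableT_comp; first exact: minv.
exact: measurable_realfun.measurable_funX.
Qed.

Lemma mF q : measurable_fun [set: R] (F q).
Proof.
rewrite /F.
apply: (@measurable_realfun.measurable_funM _ _ _ _ (fun y => (q * y - 1 + (1 - y) `^ q) / y ^+ 2) (cst _)) => //.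
exact: mG.
Qed.

End M.


Theorem proposition1p5 (R : realType) (mu : {measure set R -> \bar R}) :
  ((mu setT = 1%E /\ mu (~` `[0%R, 1%R]) = 0%E) \/ mu setT = 0%E) ->
  mu [set 0%R] = 0%E ->
  (\int[mu]_(y in `[0%R, 1%R]) ((Num.sqrt y)^-1)%:E < +oo)%E ->
  ((Psi1 mu q * ((q `^ (3/2))^-1)%:E)%E @[q --> +oo%R] --> 0%E).
Proof.
move=> _ _ hint.
pose D : set R := [set` `[0%R, 1%R]].
have mD : measurable D by exact: measurable_itv.
have inD (y : R) : D y -> 0 <= y <= 1.
  by rewrite /D /= in_itv /=.
apply/cvge_pinftyP => u ucvg.
pose v n := Num.max (u n) 1.
have v1 n : 1 <= v n by rewrite /v le_max lexx orbT.
have vcvg : v n @[n --> \oo] --> +oo.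
  apply/cvgryPge => A; move/cvgryPge: ucvg => /(_ A); apply: filterS => n hn.
  by rewrite /v le_max hn.
pose f_ (n : nat) (y : R) : \bar R := (F (v n) y)%:E.
pose g (y : R) : \bar R := ((Num.sqrt y)^-1)%:E.
have mf_ n : measurable_fun D (f_ n).
  by apply/measurable_EFinP; apply: measurable_funTS; exact: mF.
have ig : mu.-integrable D g.
  apply/integrableP; split.
    by apply/measurable_EFinP; apply: measurable_funTS; exact: msqrtV.
  under eq_integral => y _ do rewrite gee0_abs ?lee_fin ?invr_ge0 ?sqrtr_ge0 //.
  exact: hint.
have f_g : {ae mu, forall x n, D x -> (`|f_ n x| <= g x)%E}.
  apply: aeW => y n /inD Dy.
  have /andP[h1 h2] := Fdom _ _ (v1 n) Dy.
  by rewrite /f_ /g gee0_abs ?lee_fin.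
have f_f : {ae mu, forall x, D x -> f_ ^~ x @ \oo --> (cst 0%E) x}.
  apply: aeW => y /inD Dy.
  have [->|yn0] := eqVneq y 0.
    have -> : f_ ^~ 0 = cst 0%E by apply/funext => n; rewrite /f_ F0.
    exact: cvg_cst.
  have yp : 0 < y by case/andP: Dy => y0 _; rewrite lt_neqAle eq_sym yn0.
  apply: cvg_EFin; first by near=> n.
  apply: (@squeeze_cvgr _ _ _ _ (cst 0) (fun n => (y * Num.sqrt (v n))^-1)).
  - near=> n; apply/andP; split.
      by have /andP[] := Fdom _ _ (v1 n) Dy.
    by apply: Fpt => //; case/andP: Dy => _ ->; rewrite yp.
  - exact: cvg_cst.
  - apply/cvgrPdist_le => e e0.
    move/cvgryPge: vcvg => /(_ ((y * e)^-1 ^+ 2)); apply: filterS => n hn.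
    rewrite sub0r normrN.
    have vp : 0 < v n by apply: lt_le_trans (v1 n).
    have ye0 : 0 < y * e by exact: mulr_gt0.
    have s1 : (y * e)^-1 <= Num.sqrt (v n).
      have h0 : 0 <= (y * e)^-1 by rewrite invr_ge0 ltW.
      by rewrite -[X in X <= _](ger0_norm h0) -sqrtr_sqr ler_sqrt // ltW.
    have sp : 0 < Num.sqrt (v n) by rewrite sqrtr_gt0.
    have ysp : 0 < y * Num.sqrt (v n) by exact: mulr_gt0.
    rewrite ger0_norm; last by rewrite invr_ge0 ltW.
    have h : e^-1 <= y * Num.sqrt (v n).
      have -> : e^-1 = y * (y * e)^-1 by field; rewrite !gt_eqF.
      by rewrite ler_wpM2l // ltW.
    by rewrite -[X in _ <= X]invrK lef_pV2 ?posrE ?invr_gt0.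
have [_ _ hcv] := dominated_convergence mD mf_ (measurable_cst _) f_f ig f_g.
move: hcv; rewrite integral0 => hcv.
have eqn n : (\int[mu]_(x in D) f_ n x)%E = (Psi1 mu (v n) * (((v n) `^ (3/2))^-1)%:E)%E.
  rewrite /Psi1 -ge0_integralZr //.
  - by apply/measurable_EFinP; apply: measurable_funTS; exact: mG.
  - move=> y /inD Dy; rewrite lee_fin divr_ge0 ?sqr_ge0 //.
    have := @bern _ (v n) y (v1 n) Dy; lra.
  - by rewrite lee_fin invr_ge0 powR_ge0.
have hv : (Psi1 mu (v n) * ((v n `^ (3/2))^-1)%:E)%E @[n --> \oo] --> 0%E.
  have <- : (fun n => (\int[mu]_(x in D) f_ n x)%E) = (fun n => (Psi1 mu (v n) * (((v n) `^ (3/2))^-1)%:E)%E).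
    by apply/funext => n; rewrite eqn.
  exact: hcv.
apply: cvg_trans hv; apply: near_eq_cvg.
move/cvgryPge: ucvg => /(_ 1) u1.
near=> n.
have h1 : 1 <= u n by near: n.
by rewrite /v max_l.
Unshelve. all: by end_near.
Qed.
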